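(* Let $\{a_n\}_{n\ge 1}$ be a sequence of positive real numbers and let $\lambda>0$. Define \[ m_1=\liminf_{n\to\infty}\ln(\lambda n)\left(\tfrac12-\tfrac{a_{2n}}{a_n}\right),\quad m_2=\liminf_{n\to\infty}\ln(\lambda n)\left(\tfrac12-\tfrac{a_{2n+1}}{a_n}\right), \] \[ M_1=\limsup_{n\to\infty}\ln(\lambda n)\left(\tfrac12-\tfrac{a_{2n}}{a_n}\right),\quad M_2=\limsup_{n\to\infty}\ln(\lambda n)\left(\tfrac12-\tfrac{a_{2n+1}}{a_n}\right), \] and set $m=\min\{m_1,m_2\}$, $M=\max\{M_1,M_2\}$. Then: (i) if $m>\frac{\ln 2}{2}$, the series $\sum_{n=1}^\infty a_n$ converges; (ii) if $M<\frac{\ln 2}{2}$, the series $\sum_{n=1}^\infty a_n$ diverges.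
   Context: Here $\ln$ denotes the natural logarithm; liminf and limsup are taken in the extended reals. *)

(* Defs.v *)
From Stdlib Require Import Reals.
From Coquelicot Require Import Coquelicot.
Open Scope R_scope.

(* The sequence  ln(lambda n) (1/2 - a_{2n+e}/a_n)  (e = 0 or 1).
   Its value at n = 0 is irrelevant for liminf/limsup. *)
Definition ratio_seq (a : nat -> R) (lambda : R) (e : nat) (n : nat) : R :=
  ln (lambda * INR n) * (1/2 - a (2 * n + e)%nat / a n).

Definition Rbar_max (x y : Rbar) : Rbar :=
  match Rbar_le_dec x y with left _ => y | right _ => x end.

(* Main.v *)
Require Import Defs.
From Stdlib Require Import Reals Lra Lia.
From Coquelicot Require Import Coquelicot.
Open Scope R_scope.

Lemma liminf_ev (u : nat -> R) (x : R) :
  Rbar_lt (Finite x) (LimInf_seq u) ->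
  exists q N, x < q /\ forall n, (N <= n)%nat -> q < u n.
Proof.
  unfold LimInf_seq; destruct (ex_LimInf_seq u) as [l Hl]; simpl.
  destruct l as [l| |]; simpl in *; intros H.
  - assert (He : 0 < (l - x)/2) by lra.
    destruct (Hl (mkposreal _ He)) as [_ [N HN]].
    exists ((x+l)/2), N; split; [lra|]. intros n Hn. specialize (HN n Hn). simpl in HN. lra.
  - destruct (Hl (x+1)) as [N HN]. exists (x+1), N. split; [lra|exact HN].
  - contradiction.
Qed.

Lemma limsup_ev (u : nat -> R) (x : R) :
  Rbar_lt (LimSup_seq u) (Finite x) ->
  exists q N, q < x /\ forall n, (N <= n)%nat -> u n < q.
Proof.
  unfold LimSup_seq; destruct (ex_LimSup_seq u) as [l Hl]; simpl.
  destruct l as [l| |]; simpl in *; intros H.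
  - assert (He : 0 < (x - l)/2) by lra.
    destruct (Hl (mkposreal _ He)) as [_ [N HN]].
    exists ((x+l)/2), N; split; [lra|]. intros n Hn. specialize (HN n Hn). simpl in HN. lra.
  - contradiction.
  - destruct (Hl (x-1)) as [N HN]. exists (x-1), N. split; [lra|exact HN].
Qed.

Lemma min_lt (x : R) (y z : Rbar) : Rbar_lt x (Rbar_min y z) -> Rbar_lt x y /\ Rbar_lt x z.
Proof.
  intros H; split; eapply Rbar_lt_le_trans; eauto; [apply Rbar_min_l|apply Rbar_min_r].
Qed.

Lemma max_lt (x : R) (y z : Rbar) : Rbar_lt (Rbar_max y z) x -> Rbar_lt y x /\ Rbar_lt z x.
Proof.
  unfold Rbar_max; destruct (Rbar_le_dec y z) as [h|h]; intros H; split; auto.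
  - eapply Rbar_le_lt_trans; eauto.
  - apply Rbar_not_le_lt in h. eapply Rbar_lt_trans; [exact h | exact H].
Qed.

Fixpoint bsum (f : nat -> R) (m len : nat) : R :=
  match len with O => 0 | S l => bsum f m l + f (m + l)%nat end.

Lemma bsum_split f m l1 l2 : bsum f m (l1 + l2) = bsum f m l1 + bsum f (m + l1) l2.
Proof.
  induction l2; simpl.
  - rewrite Nat.add_0_r; ring.
  - rewrite Nat.add_succ_r; simpl. rewrite IHl2. rewrite Nat.add_assoc. ring.
Qed.

Lemma bsum_le f g m l : (forall i, (i < l)%nat -> f (m + i)%nat <= g (m + i)%nat) ->
  bsum f m l <= bsum g m l.
Proof.
  induction l; simpl; intros H; [lra|].
  apply Rplus_le_compat; [apply IHl; intros; apply H; lia | apply H; lia].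
Qed.

Lemma bsum_scal r f m l : bsum (fun n => r * f n) m l = r * bsum f m l.
Proof. induction l; simpl; [ring| rewrite IHl; ring]. Qed.

Lemma bsum_double f m l :
  bsum f (2*m) (2*l) = bsum (fun n => f (2*n)%nat + f (2*n+1)%nat) m l.
Proof.
  induction l; [reflexivity|].
  replace (2 * S l)%nat with (S (S (2*l))) by lia. cbn [bsum].
  rewrite IHl. replace (2 * m + 2 * l)%nat with (2*(m+l))%nat by lia.
  replace (2 * m + S (2 * l))%nat with (2*(m+l)+1)%nat by lia. ring.
Qed.

Lemma bsum_nonneg f m l : (forall i, (i < l)%nat -> 0 <= f (m + i)%nat) -> 0 <= bsum f m l.
Proof.
  induction l; simpl; intros H; [lra|].
  apply Rplus_le_le_0_compat; [apply IHl; intros; apply H; lia | apply H; lia].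
Qed.

Lemma bsum_mono f m l1 l2 : (forall i, 0 <= f (m + i)%nat) -> (l1 <= l2)%nat ->
  bsum f m l1 <= bsum f m l2.
Proof.
  intros H Hl. replace l2 with (l1 + (l2 - l1))%nat by lia. rewrite bsum_split.
  assert (0 <= bsum f (m + l1) (l2 - l1)); [|lra].
  apply bsum_nonneg. intros. rewrite <- Nat.add_assoc. apply H.
Qed.

Lemma sum_n_bsum (a : nat -> R) N : sum_n (fun n => a (S n)) N = bsum a 1 (S N).
Proof.
  induction N.
  - rewrite sum_O. simpl. ring.
  - rewrite sum_Sn, IHN. simpl. unfold plus; simpl. reflexivity.
Qed.

Lemma pow2_ge1 k : (1 <= 2 ^ k)%nat.
Proof. pose proof (Nat.pow_gt_lin_r 2 k). lia. Qed.

Lemma bsum_dyadic a K :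
  bsum a 1 (2 ^ S K - 1) = bsum a 1 (2 ^ K - 1) + bsum a (2 ^ K) (2 ^ K).
Proof.
  pose proof (pow2_ge1 K). simpl (2 ^ S K)%nat.
  replace (2 ^ K + (2 ^ K + 0) - 1)%nat with ((2^K - 1) + 2^K)%nat by lia.
  rewrite bsum_split. f_equal. f_equal. lia.
Qed.

Definition T (a : nat -> R) k := bsum a (2 ^ k) (2 ^ k).

Lemma V_eq a K : bsum a 1 (2 ^ K - 1) = bsum (T a) 0 K.
Proof.
  induction K; [reflexivity|].
  rewrite bsum_dyadic, IHK. simpl. reflexivity.
Qed.

Lemma pow2S k : (2 ^ S k = 2 * 2 ^ k)%nat.
Proof. reflexivity. Qed.

Lemma block_upper a k r :
  (forall n, (2 ^ k <= n < 2 * 2 ^ k)%nat -> a (2*n)%nat + a (2*n+1)%nat <= r * a n) ->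
  T a (S k) <= r * T a k.
Proof.
  intros H. unfold T. rewrite pow2S, bsum_double, <- bsum_scal.
  apply bsum_le. intros i Hi. apply H. lia.
Qed.

Lemma block_lower a k r :
  (forall n, (2 ^ k <= n < 2 * 2 ^ k)%nat -> r * a n <= a (2*n)%nat + a (2*n+1)%nat) ->
  r * T a k <= T a (S k).
Proof.
  intros H. unfold T. rewrite pow2S, bsum_double, <- bsum_scal.
  apply bsum_le. intros i Hi. apply H. lia.
Qed.

Lemma T_nonneg a k : (forall n, (1 <= n)%nat -> 0 < a n) -> 0 <= T a k.
Proof.
  intros ha. unfold T. apply bsum_nonneg. intros i _. left. apply ha.
  pose proof (pow2_ge1 k). lia.
Qed.

Lemma T_pos a k : (forall n, (1 <= n)%nat -> 0 < a n) -> 0 < T a k.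
Proof.
  intros ha. unfold T. pose proof (pow2_ge1 k).
  destruct (2 ^ k)%nat eqn:E; [lia|]. simpl.
  apply Rplus_le_lt_0_compat; [apply bsum_nonneg; intros; left|]; apply ha; lia.
Qed.

Lemma INR2 : INR 2 = 2.
Proof. simpl. ring. Qed.

Lemma ln2_pos : 0 < ln 2.
Proof. pose proof ln_lt_2. lra. Qed.

Lemma ln_lam_pow lambda k : 0 < lambda ->
  ln (lambda * INR (2 ^ k)) = ln lambda + INR k * ln 2.
Proof.
  intros hl. rewrite pow_INR, INR2, ln_mult, ln_pow; try lra.
  apply pow_lt; lra.
Qed.

Lemma ln_bounds lambda k n : 0 < lambda -> (2 ^ k <= n < 2 * 2 ^ k)%nat ->
  ln lambda + INR k * ln 2 <= ln (lambda * INR n) <= ln lambda + INR (S k) * ln 2.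
Proof.
  intros hl Hn. rewrite <- !ln_lam_pow by lra. rewrite pow2S.
  pose proof (pow2_ge1 k).
  assert (0 < INR (2^k)) by (apply lt_0_INR; lia).
  split; apply ln_le.
  - apply Rmult_lt_0_compat; lra.
  - apply Rmult_le_compat_l; [lra|]. apply le_INR. lia.
  - apply Rmult_lt_0_compat; [lra|]. apply lt_0_INR; lia.
  - apply Rmult_le_compat_l; [lra|]. apply le_INR. lia.
Qed.

Lemma ln_step D c : 0 < D -> 0 < c -> ln (D + c) <= ln D + c / D.
Proof.
  intros hD hc.
  rewrite <- (ln_exp (ln D + c / D)). apply ln_le; [lra|].
  rewrite exp_plus, exp_ln by lra. pose proof (exp_ineq1_le (c / D)).
  replace (D + c) with (D * (1 + c / D)) by (field; lra).
  apply Rmult_le_compat_l; lra.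
Qed.

Lemma exists_big_k (lambda A : R) (K0 : nat) : exists k, (K0 <= k)%nat /\ A < ln lambda + INR k * ln 2.
Proof.
  destruct (INR_archimed (ln 2) (A - ln lambda)) as [n Hn]; [apply ln2_pos|].
  exists (Nat.max K0 n). split; [lia|].
  assert (INR n <= INR (Nat.max K0 n)) by (apply le_INR; lia).
  pose proof ln2_pos. nra.
Qed.

Lemma pair_upper an a0 a1 l L q : 0 < an -> 0 < l -> l <= L -> 0 < q ->
  q < l * (1/2 - a0/an) -> q < l * (1/2 - a1/an) -> a0 + a1 <= (1 - 2*q/L) * an.
Proof.
  intros han hl hL hq h0 h1.
  assert (e0 : l * (1/2 - a0/an) * an = l * (an/2 - a0)) by (field; lra).
  assert (e1 : l * (1/2 - a1/an) * an = l * (an/2 - a1)) by (field; lra).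
  assert (q * an < l * (an/2 - a0)) by (rewrite <- e0; apply Rmult_lt_compat_r; lra).
  assert (q * an < l * (an/2 - a1)) by (rewrite <- e1; apply Rmult_lt_compat_r; lra).
  assert (Hs : a0 + a1 < an - 2*q*an / l).
  { assert (2*q*an < l * (an - a0 - a1)) by lra.
    apply (Rmult_lt_reg_r l); [lra|]. unfold Rdiv.
    replace ((an - 2 * q * an * / l) * l) with (an * l - 2*q*an) by (field; lra). lra. }
  assert (2*q*an / L <= 2*q*an / l).
  { unfold Rdiv. apply Rmult_le_compat_l; [nra|]. apply Rinv_le_contravar; lra. }
  replace ((1 - 2*q/L) * an) with (an - 2*q*an/L) by (field; lra). lra.
Qed.

Lemma pair_lower an a0 a1 l D q : 0 < an -> 0 < D -> D <= l -> 0 < q ->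
  l * (1/2 - a0/an) < q -> l * (1/2 - a1/an) < q -> (1 - 2*q/D) * an <= a0 + a1.
Proof.
  intros han hD hl hq h0 h1.
  assert (e0 : l * (1/2 - a0/an) * an = l * (an/2 - a0)) by (field; lra).
  assert (e1 : l * (1/2 - a1/an) * an = l * (an/2 - a1)) by (field; lra).
  assert (l * (an/2 - a0) < q * an) by (rewrite <- e0; apply Rmult_lt_compat_r; lra).
  assert (l * (an/2 - a1) < q * an) by (rewrite <- e1; apply Rmult_lt_compat_r; lra).
  assert (Hs : an - 2*q*an / l < a0 + a1).
  { assert (l * (an - a0 - a1) < 2*q*an) by lra.
    apply (Rmult_lt_reg_r l); [lra|]. unfold Rdiv.
    replace ((an - 2 * q * an * / l) * l) with (an * l - 2*q*an) by (field; lra). lra. }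
  assert (2*q*an / l <= 2*q*an / D).
  { unfold Rdiv. apply Rmult_le_compat_l; [nra|]. apply Rinv_le_contravar; lra. }
  replace ((1 - 2*q/D) * an) with (an - 2*q*an/D) by (field; lra). lra.
Qed.

Lemma kummer (t L : nat -> R) (d : R) (K0 : nat) : 0 < d ->
  (forall k, 0 <= t k) -> (forall k, (K0 <= k)%nat -> 0 <= L k) ->
  (forall k, (K0 <= k)%nat -> d * t (S k) <= L k * t k - L (S k) * t (S k)) ->
  exists B, forall K, bsum t 0 K <= B.
Proof.
  intros hd ht hL hk.
  set (C := d * bsum t 0 (S K0) + L K0 * t K0).
  assert (Inv : forall j, d * bsum t 0 (S (K0 + j)) + L (K0 + j)%nat * t (K0 + j)%nat <= C).
  { induction j.
    - rewrite Nat.add_0_r. unfold C; lra.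
    - replace (K0 + S j)%nat with (S (K0 + j)) by lia.
      cbn [bsum] in *. specialize (hk (K0 + j)%nat ltac:(lia)).
      replace (0 + S (K0 + j))%nat with (S (K0 + j)) by lia. nra. }
  exists (C / d). intros K.
  assert (bsum t 0 K <= bsum t 0 (S (K0 + K))) by (apply bsum_mono; [intros; apply ht| lia]).
  specialize (Inv K). assert (0 <= L (K0 + K)%nat * t (K0 + K)%nat).
  { apply Rmult_le_pos; [apply hL; lia| apply ht]. }
  apply Rle_trans with (bsum t 0 (S (K0 + K))); [lra|].
  apply (Rmult_le_reg_l d); [lra|]. unfold Rdiv.
  replace (d * (C * / d)) with C by (field; lra). lra.
Qed.

Lemma harm (t D : nat -> R) K1 A c : 0 < c -> 0 < A -> (forall k, 0 <= t k) ->
  (forall k, (K1 <= k)%nat -> 0 < D k) ->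
  (forall k, (K1 <= k)%nat -> D (S k) = D k + c) ->
  (forall k, (K1 <= k)%nat -> A <= D k * t k) ->
  forall j, bsum t 0 K1 + (A/c) * (ln (D (K1 + j)%nat) - ln (D K1)) <= bsum t 0 (K1 + j).
Proof.
  intros hc hA ht hD hS hAk j. induction j.
  - rewrite Nat.add_0_r. replace (ln (D K1) - ln (D K1)) with 0 by ring. lra.
  - replace (K1 + S j)%nat with (S (K1 + j)) by lia. cbn [bsum].
    replace (0 + (K1 + j))%nat with (K1 + j)%nat by lia.
    set (k := (K1 + j)%nat) in *.
    assert (hk : (K1 <= k)%nat) by (unfold k; lia).
    rewrite (hS k hk). pose proof (hD k hk). pose proof (hAk k hk).
    pose proof (ln_step (D k) c ltac:(lra) hc).
    assert (A / D k <= t k).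
    { apply (Rmult_le_reg_l (D k)); [lra|]. unfold Rdiv.
      replace (D k * (A * / D k)) with A by (field; lra). lra. }
    assert ((A/c) * (ln (D k + c) - ln (D k)) <= (A/c) * (c / D k)).
    { apply Rmult_le_compat_l; [apply Rlt_le; apply Rdiv_lt_0_compat; lra|lra]. }
    replace ((A/c) * (c / D k)) with (A / D k) in H3 by (field; lra).
    assert (E : A/c*(ln (D k + c) - ln (D K1)) = A/c*(ln (D k + c) - ln (D k)) + A/c*(ln (D k) - ln (D K1))) by ring.
    rewrite E. lra.
Qed.

Lemma kstep L t t' q c : 0 < L -> 0 <= t -> 0 <= t' -> 0 < q ->
  t' <= (1 - 2*q/L) * t -> (2*q - c) * t' <= L * t - (L + c) * t'.
Proof.
  intros hL ht ht' hq h.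
  assert (h1 : L * t' <= (L - 2*q) * t).
  { replace ((L - 2*q) * t) with (L * ((1 - 2*q/L) * t)) by (field; lra).
    apply Rmult_le_compat_l; lra. }
  assert (h2 : (L + 2*q) * (L * t') <= (L + 2*q) * ((L - 2*q) * t))
    by (apply Rmult_le_compat_l; lra).
  assert (h3 : L * ((L + 2*q) * t') <= L * (L * t)) by nra.
  apply Rmult_le_reg_l in h3; [|lra]. lra.
Qed.

Lemma dstep D t t' q c : 0 < c -> 0 < D -> 0 <= t -> 0 < q -> 2*q*c <= D * (c - 2*q) ->
  (1 - 2*q/D) * t <= t' -> D * t <= (D + c) * t'.
Proof.
  intros hc0 hD ht hq hc h.
  assert (h1 : (D - 2*q) * t <= D * t').
  { replace ((D - 2*q) * t) with (D * ((1 - 2*q/D) * t)) by (field; lra).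
    apply Rmult_le_compat_l; lra. }
  assert (0 <= c + 2*q - 2*q) by nra.
  assert (h2 : (D + c) * ((D - 2*q) * t) <= (D + c) * (D * t')) by (apply Rmult_le_compat_l; lra).
  assert (h3 : D * (D * t) <= D * ((D + c) * t')) by nra.
  apply Rmult_le_reg_l in h3; lra.
Qed.

Lemma psums_incr (a : nat -> R) : (forall n : nat, (1 <= n)%nat -> 0 < a n) ->
  forall n, sum_n (fun n => a (S n)) n <= sum_n (fun n => a (S n)) (S n).
Proof.
  intros ha n. rewrite sum_Sn. unfold plus; simpl. pose proof (ha (S (S n)) ltac:(lia)). lra.
Qed.

Lemma V_le_psum a K : (forall n : nat, (1 <= n)%nat -> 0 < a n) ->
  bsum (T a) 0 K <= sum_n (fun n => a (S n)) (2 ^ K).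
Proof.
  intros ha. rewrite <- V_eq, sum_n_bsum. apply bsum_mono; [intros; left; apply ha; lia| lia].
Qed.

Lemma psum_le_V a N : (forall n : nat, (1 <= n)%nat -> 0 < a n) ->
  sum_n (fun n => a (S n)) N <= bsum (T a) 0 (S N).
Proof.
  intros ha. rewrite <- V_eq, sum_n_bsum. apply bsum_mono; [intros; left; apply ha; lia|].
  pose proof (Nat.pow_gt_lin_r 2 (S N)). lia.
Qed.

Theorem theorem2p1 (a : nat -> R) (lambda : R)
  (ha : forall n : nat, (1 <= n)%nat -> 0 < a n) (hl : 0 < lambda) :
  let m := Rbar_min (LimInf_seq (ratio_seq a lambda 0)) (LimInf_seq (ratio_seq a lambda 1)) in
  let M := Rbar_max (LimSup_seq (ratio_seq a lambda 0)) (LimSup_seq (ratio_seq a lambda 1)) in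
  (Rbar_lt (Finite (ln 2 / 2)) m -> ex_series (fun n => a (S n))) /\
  (Rbar_lt M (Finite (ln 2 / 2)) -> ~ ex_series (fun n => a (S n))).
Proof.
  intros m M. pose proof ln2_pos as hln2. split; intros H.
  - apply min_lt in H as [H0 H1].
    apply liminf_ev in H0 as [q0 [N0 [Hq0 HN0]]].
    apply liminf_ev in H1 as [q1 [N1 [Hq1 HN1]]].
    set (q := Rmin q0 q1).
    assert (Hq : ln 2 / 2 < q) by (apply Rmin_glb_lt; lra).
    destruct (exists_big_k lambda 0 (Nat.max N0 N1)) as [K0 [HK0 HD0]].
    set (L := fun k => ln lambda + INR (S k) * ln 2).
    assert (HL : forall k, (K0 <= k)%nat -> 0 < L k).
    { intros k hk. unfold L. assert (INR K0 <= INR (S k)) by (apply le_INR; lia). nra. }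
    assert (Hrec : forall k, (K0 <= k)%nat -> T a (S k) <= (1 - 2*q/L k) * T a k).
    { intros k hk. apply block_upper. intros n Hn.
      pose proof (Nat.pow_gt_lin_r 2 k ltac:(lia)).
      pose proof (ln_bounds lambda k n hl Hn) as [lb ub].
      assert (INR K0 <= INR k) by (apply le_INR; lia).
      specialize (HN0 n ltac:(lia)). specialize (HN1 n ltac:(lia)).
      unfold ratio_seq in HN0, HN1. rewrite Nat.add_0_r in HN0.
      apply (pair_upper (a n) _ _ (ln (lambda * INR n))).
      + apply ha; lia.
      + nra.
      + exact ub.
      + lra.
      + pose proof (Rmin_l q0 q1) as Hm. fold q in Hm. lra.
      + pose proof (Rmin_r q0 q1) as Hm. fold q in Hm. lra. }
    destruct (kummer (T a) L (2*q - ln 2) K0) as [B HB].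
    + lra.
    + intros; apply T_nonneg; exact ha.
    + intros k hk; left; apply HL; exact hk.
    + intros k hk.
      replace (L (S k)) with (L k + ln 2) by (unfold L; rewrite (S_INR (S k)); ring).
      apply kstep; [apply HL; exact hk| apply T_nonneg; exact ha| apply T_nonneg; exact ha| lra|].
      apply Hrec; exact hk.
    + destruct (ex_finite_lim_seq_incr (sum_n (fun n => a (S n))) B) as [l Hl].
      * apply psums_incr; exact ha.
      * intros n. eapply Rle_trans; [apply psum_le_V; exact ha| apply HB].
      * exists l. exact Hl.
  - apply max_lt in H as [H0 H1].
    apply limsup_ev in H0 as [q0 [N0 [Hq0 HN0]]].
    apply limsup_ev in H1 as [q1 [N1 [Hq1 HN1]]].
    set (q := Rmax (Rmax q0 q1) (ln 2 / 4)).
    assert (Hq : q < ln 2 / 2) by (apply Rmax_lub_lt; [apply Rmax_lub_lt|]; lra).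
    assert (Hq4 : ln 2 / 4 <= q) by apply Rmax_r.
    assert (Hq01 : q0 <= q /\ q1 <= q).
    { pose proof (Rmax_l q0 q1); pose proof (Rmax_r q0 q1);
      pose proof (Rmax_l (Rmax q0 q1) (ln 2 / 4)) as Hm. fold q in Hm. lra. }
    set (Dmin := 2*q*ln 2 / (ln 2 - 2*q)).
    assert (HDmin : 0 < Dmin) by (apply Rdiv_lt_0_compat; nra).
    destruct (exists_big_k lambda Dmin (Nat.max N0 N1)) as [K1 [HK1 HD1]].
    set (D := fun k => ln lambda + INR k * ln 2).
    assert (HDge : forall k, (K1 <= k)%nat -> Dmin < D k).
    { intros k hk. unfold D. assert (INR K1 <= INR k) by (apply le_INR; lia). nra. }
    assert (HDc : forall k, (K1 <= k)%nat -> 2*q*ln 2 <= D k * (ln 2 - 2*q)).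
    { intros k hk. pose proof (HDge k hk) as H. unfold Dmin in H.
      apply Rlt_le. apply (Rmult_lt_reg_r (/ (ln 2 - 2*q))).
      - apply Rinv_0_lt_compat; lra.
      - replace (D k * (ln 2 - 2 * q) * / (ln 2 - 2 * q)) with (D k) by (field; lra). exact H. }
    assert (Hrec : forall k, (K1 <= k)%nat -> D k * T a k <= D (S k) * T a (S k)).
    { intros k hk.
      replace (D (S k)) with (D k + ln 2) by (unfold D; rewrite S_INR; ring).
      apply (dstep _ _ _ q); [lra| pose proof (HDge k hk); lra | apply T_nonneg; exact ha | lra | apply HDc; exact hk |].
      apply block_lower. intros n Hn.
      pose proof (Nat.pow_gt_lin_r 2 k ltac:(lia)).
      pose proof (ln_bounds lambda k n hl Hn) as [lb ub].
      specialize (HN0 n ltac:(lia)). specialize (HN1 n ltac:(lia)).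
      unfold ratio_seq in HN0, HN1. rewrite Nat.add_0_r in HN0.
      pose proof (HDge k hk).
      apply (pair_lower (a n) _ _ (ln (lambda * INR n))).
      + apply ha; lia.
      + lra.
      + exact lb.
      + lra.
      + lra.
      + lra. }
    set (A := D K1 * T a K1).
    assert (HA : 0 < A).
    { unfold A. apply Rmult_lt_0_compat; [pose proof (HDge K1 (le_n _)); lra| apply T_pos; exact ha]. }
    assert (HAk : forall k, (K1 <= k)%nat -> A <= D k * T a k).
    { intros k hk. replace k with (K1 + (k - K1))%nat by lia.
      induction (k - K1)%nat as [|j IH].
      - rewrite Nat.add_0_r. unfold A; lra.
      - replace (K1 + S j)%nat with (S (K1 + j)) by lia.
        eapply Rle_trans; [exact IH| apply Hrec; lia]. }
    pose proof (harm (T a) D K1 A (ln 2) hln2 HA (fun k => T_nonneg a k ha)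
                  (fun k hk => ltac:(pose proof (HDge k hk); lra))
                  (fun k _ => ltac:(unfold D; rewrite S_INR; ring)) HAk) as Hh.
    intros [l Hl].
    assert (Hbound : forall K, bsum (T a) 0 K <= l).
    { intros K. eapply Rle_trans; [apply V_le_psum; exact ha|].
      apply (is_lim_seq_incr_compare (sum_n (fun n => a (S n)))); [exact Hl| apply psums_incr; exact ha]. }
    set (target := ln (D K1) + (Rabs l + 1) * ln 2 / A).
    destruct (exists_big_k lambda (exp target) K1) as [k [hk hkD]].
    assert (Hlnk : target < ln (D k)).
    { rewrite <- (ln_exp target). apply ln_increasing; [apply exp_pos| exact hkD]. }
    specialize (Hh (k - K1)%nat). replace (K1 + (k - K1))%nat with k in Hh by lia.
    assert (0 <= bsum (T a) 0 K1) by (apply bsum_nonneg; intros; apply T_nonneg; exact ha).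
    assert (A / ln 2 * (target - ln (D K1)) = Rabs l + 1).
    { unfold target. field. lra. }
    assert (A / ln 2 * (target - ln (D K1)) <= A / ln 2 * (ln (D k) - ln (D K1))).
    { apply Rmult_le_compat_l; [apply Rlt_le, Rdiv_lt_0_compat; lra| lra]. }
    specialize (Hbound k). pose proof (Rle_abs l). lra.
Qed.
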